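(* Let $X \subset \mathbb{R}^n$ be finite with at least $k+1$ points. Let $(s,[x])$ and $(t,[y])$ be elements of $\Gamma_{k}(X)$, and let $(s_{0},[x_{0}])$ and $(t_{0},[y_{0}])$ be the maximal branch points below $(s,[x])$ and $(t,[y])$, respectively. Then $(s_{0},[x_{0}]) \cup (t_{0},[y_{0}])$ is the maximal branch point below $(s,[x]) \cup (t,[y])$.
   Context: $\mathbb{R}^n$ has Euclidean metric $d$. For $s\ge 0$, $V_s(X)$ is the Vietoris–Rips complex (vertex set $X$, simplices nonempty subsets with pairwise distances $\le s$), and for an integer $k\ge 0$, $L_{s,k}(X)$ is the full subcomplex of $V_s(X)$ on the vertices $x$ having at least $k$ points $x'\ne x$ of $X$ with $d(x,x')\le s$. $\Gamma_{k}(X)$ is the poset whose elements are pairs $(s,[x])$ with $s \in \mathbb{R}_{\geq 0}$ and $[x] \in \pi_{0}L_{s,k}(X)$, with $(s,[x]) \leq (t,[y])$ iff $s \leq t$ and the function $\pi_{0}L_{s,k}(X) \to \pi_{0}L_{t,k}(X)$ induced by inclusion sends $[x]$ to $[y]$. $\cup$ denotes least upper bound (join) in $\Gamma_k(X)$, which exists for any two elements. An element $(t,[x])$ of $\Gamma_{k}(X)$ is a branch point if either (1) there is $s_{0} < t$ such that for all $s$ with $s_{0} \leq s < t$ there are two distinct elements $(s,[x_{0}]) \neq (s,[x_{1}])$ with $(s,[x_{0}]) \leq (t,[x])$ and $(s,[x_{1}]) \leq (t,[x])$; or (2) there is no element $(s,[y])$ with $s<t$ and $(s,[y]) \leq (t,[x])$.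 The maximal branch point below an element $p$ is the (unique) branch point $b \le p$ such that every branch point $b' \le p$ satisfies $b' \le b$. *)

(* Defs.v *)
From Stdlib Require Import Reals List Relations.
Import ListNotations.
Open Scope R_scope.

(* Points of R^n are lists of reals of length n (the length constraint is a
   hypothesis of the theorem). *)
Definition pt := list R.

Definition sqsum (l : list R) : R := fold_right Rplus 0 l.
Definition dist (x y : pt) : R :=
  sqrt (sqsum (map (fun p => (fst p - snd p) ^ 2) (combine x y))).

Section Gamma.
Variables (X : list pt) (k : nat).

(* x is a vertex of L_{s,k}(X): x in X having at least k points x' <> x of X
   with d(x,x') <= s. *)
Definition inL (s : R) (x : pt) : Prop :=
  In x X /\
  exists L : list pt, NoDup L /\ length L = k /\
    forall x', In x' L -> In x' X /\ x' <> x /\ dist x x' <= s.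

(* Edge of the 1-skeleton of the full subcomplex L_{s,k}(X) of V_s(X). *)
Definition edgeL (s : R) (a b : pt) : Prop :=
  inL s a /\ inL s b /\ dist a b <= s.

(* Same path component of L_{s,k}(X) (pi_0 of a simplicial complex is
   given by connectivity of its 1-skeleton). *)
Definition sameComp (s : R) (x y : pt) : Prop :=
  inL s x /\ inL s y /\ clos_refl_trans pt (edgeL s) x y.

Record Gelt := mkG { gs : R; gC : pt -> Prop }.

Definition isG (p : Gelt) : Prop :=
  0 <= gs p /\ exists x, inL (gs p) x /\ forall y, gC p y <-> sameComp (gs p) x y.

Definition geq (p q : Gelt) : Prop :=
  gs p = gs q /\ forall y, gC p y <-> gC q y.

(* (s,[x]) <= (t,[y]) iff s <= t and the inclusion-induced map
   pi_0 L_s -> pi_0 L_t sends [x] to [y] (i.e. the class [x] lands in [y]). *)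
Definition gle (p q : Gelt) : Prop :=
  gs p <= gs q /\ forall y, gC p y -> gC q y.

Definition branch (q : Gelt) : Prop :=
  (exists s0, s0 < gs q /\
     forall s, s0 <= s < gs q ->
       exists p0 p1, isG p0 /\ isG p1 /\ gs p0 = s /\ gs p1 = s /\
         ~ geq p0 p1 /\ gle p0 q /\ gle p1 q)
  \/ ~ (exists p, isG p /\ gs p < gs q /\ gle p q).

Definition maxbranch (b p : Gelt) : Prop :=
  isG b /\ branch b /\ gle b p /\
  forall b', isG b' -> branch b' -> gle b' p -> gle b' b.

Definition glub (j p q : Gelt) : Prop :=
  isG j /\ gle p j /\ gle q j /\
  forall u, isG u -> gle p u -> gle q u -> gle j u.

End Gamma.

(* Main.v *)
Require Import Defs.
From Stdlib Require Import Reals List Relations Lra Classical.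
Open Scope R_scope.

Lemma dist_sym (x y : pt) : Defs.dist x y = Defs.dist y x.
Proof.
  unfold Defs.dist; f_equal. revert y; induction x as [|a x IH]; destruct y; simpl; auto.
  unfold sqsum in *; simpl. f_equal; [ring | apply IH].
Qed.

Lemma inL_mono X k s t x : s <= t -> inL X k s x -> inL X k t x.
Proof.
  intros H [Hx [L [H1 [H2 H3]]]]. split; auto. exists L.
  split; [auto|split; [auto|]]. intros x' Hx'. destruct (H3 x' Hx') as [a [b c]].
  repeat split; auto; lra.
Qed.

Lemma crt_mono (R1 R2 : relation pt) a b : (forall u v, R1 u v -> R2 u v) ->
  clos_refl_trans pt R1 a b -> clos_refl_trans pt R2 a b.
Proof.
  intros H. induction 1; [apply rt_step; auto | apply rt_refl | eapply rt_trans; eauto].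
Qed.

Lemma sameComp_mono X k s t x y : s <= t -> sameComp X k s x y -> sameComp X k t x y.
Proof.
  intros H [a [b c]]. split; [eapply inL_mono; eauto|split; [eapply inL_mono; eauto|]].
  apply crt_mono with (edgeL X k s); auto.
  intros u v [e1 [e2 e3]]. split; [|split]; try (eapply inL_mono; eauto); lra.
Qed.

Lemma crt_sym X k s a b : clos_refl_trans pt (edgeL X k s) a b ->
  clos_refl_trans pt (edgeL X k s) b a.
Proof.
  induction 1; [apply rt_step | apply rt_refl | eapply rt_trans; eauto].
  destruct H as [e1 [e2 e3]]. split; [|split]; auto. rewrite dist_sym; auto.
Qed.

Lemma sameComp_sym X k s a b : sameComp X k s a b -> sameComp X k s b a.
Proof. intros [a1 [a2 a3]]. split; [|split]; auto. apply crt_sym; auto. Qed.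

Lemma sameComp_trans X k s a b c : sameComp X k s a b -> sameComp X k s b c -> sameComp X k s a c.
Proof. intros [a1 [a2 a3]] [b1 [b2 b3]]. split; [|split]; auto. eapply rt_trans; eauto. Qed.

Lemma sameComp_refl X k s a : inL X k s a -> sameComp X k s a a.
Proof. intros H. split; [|split]; auto. apply rt_refl. Qed.

Lemma comp_closed X k y w z : isG X k y -> gC y w -> sameComp X k (gs y) w z -> gC y z.
Proof.
  intros [_ [r [Hr Hiff]]] Hw Hwz. apply Hiff. apply Hiff in Hw. eapply sameComp_trans; eauto.
Qed.

Lemma comp_same X k y w z : isG X k y -> gC y w -> gC y z -> sameComp X k (gs y) w z.
Proof.
  intros [_ [r [Hr Hiff]]] Hw Hz. apply Hiff in Hw. apply Hiff in Hz.
  eapply sameComp_trans; [apply sameComp_sym|]; eauto.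
Qed.

Lemma gC_ne X k p : isG X k p -> exists w, gC p w.
Proof. intros [_ [r [Hr Hiff]]]. exists r. apply Hiff. apply sameComp_refl; auto. Qed.

Lemma gle_refl p : gle p p.
Proof. split; [lra| auto]. Qed.

Lemma gle_trans a b c : gle a b -> gle b c -> gle a c.
Proof. intros [h1 h2] [i1 i2]. split; [lra| auto]. Qed.

Lemma comparable_sc X k a x y : isG X k a -> isG X k x -> isG X k y ->
  gle a x -> gle a y -> gs x <= gs y -> gle x y.
Proof.
  intros Ha Hx Hy [_ hx] [_ hy] Hs. split; auto.
  destruct (gC_ne X k a Ha) as [w Hw].
  intros z Hz. apply (comp_closed X k y w z); auto.
  eapply sameComp_mono; eauto. apply comp_same; auto.
Qed.

Lemma comparable X k a x y : isG X k a -> isG X k x -> isG X k y ->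
  gle a x -> gle a y -> gle x y \/ gle y x.
Proof.
  intros. destruct (Rle_dec (gs x) (gs y)).
  - left; apply (comparable_sc X k a); auto.
  - right; apply (comparable_sc X k a); auto; lra.
Qed.

Lemma branch_transfer X k q q' : gle q q' -> gle q' q -> branch X k q -> branch X k q'.
Proof.
  intros H1 H2 Hb. assert (E : gs q = gs q') by (destruct H1, H2; lra).
  destruct Hb as [[s0 [Hs0 Hall]] | Hn].
  - left. exists s0. rewrite <- E. split; auto. intros s Hs.
    destruct (Hall s Hs) as [p0 [p1 [a [b [c [d [e [f g]]]]]]]].
    exists p0, p1. refine (conj a (conj b (conj c (conj d (conj e (conj _ _)))))); eapply gle_trans; eauto.
  - right. intros [p [a [b c]]]. apply Hn. exists p. rewrite E. split; [auto|split; [auto|]].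
    eapply gle_trans; eauto.
Qed.

Lemma finish X k j c m : isG X k j -> branch X k c -> gle j c -> gle c j -> gle c m ->
  (forall b', isG X k b' -> branch X k b' -> gle b' m -> gle b' c) -> maxbranch X k j m.
Proof.
  intros HjG Hc H1 H2 H3 H4. split; auto. split; [eapply branch_transfer; eauto|].
  split; [eapply gle_trans; eauto|]. intros b' a b d. eapply gle_trans; [apply H4; eauto|]; auto.
Qed.

Lemma lift X k p m s : isG X k p -> isG X k m -> gle p m -> gs p <= s -> s <= gs m ->
  exists p0, isG X k p0 /\ gs p0 = s /\ gle p p0 /\ gle p0 m.
Proof.
  intros Hp HmG Hpm H1 H2. pose proof Hp as [H0 [xp [Hxp Hiff]]].
  exists (mkG s (sameComp X k s xp)). split; [|split; [reflexivity|split]].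
  - split; simpl; [lra|]. exists xp. split; [eapply inL_mono; eauto|]. tauto.
  - split; simpl; auto. intros y Hy. apply Hiff in Hy. eapply sameComp_mono; eauto.
  - split; simpl; auto. intros y Hy. apply (comp_closed X k m xp y); auto.
    + apply (proj2 Hpm). apply Hiff. apply sameComp_refl; auto.
    + eapply sameComp_mono; eauto.
Qed.

Theorem lemma12 (n : nat) (X : list pt) (k : nat)
  (HX : NoDup X) (Hdim : Forall (fun v => length v = n) X)
  (Hcard : (k + 1 <= length X)%nat)
  (p q b1 b2 : Gelt)
  (Hp : isG X k p) (Hq : isG X k q)
  (Hb1 : maxbranch X k b1 p) (Hb2 : maxbranch X k b2 q) :
  forall j m : Gelt, glub X k j b1 b2 -> glub X k m p q -> maxbranch X k j m.
Proof.
  intros j m [HjG [Hb1j [Hb2j Hjmin]]] [HmG [Hpm [Hqm Hmmin]]].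
  destruct Hb1 as [Hb1G [Hb1br [Hb1p Hb1max]]].
  destruct Hb2 as [Hb2G [Hb2br [Hb2q Hb2max]]].
  destruct (classic (gle p q)) as [Hpq|Hnpq].
  { assert (Hmq : gle m q) by (apply Hmmin; auto using gle_refl).
    assert (Hb12 : gle b1 b2) by (apply Hb2max; auto; apply gle_trans with p; auto).
    apply (finish X k j b2 m HjG Hb2br).
    - apply Hjmin; auto using gle_refl.
    - auto.
    - apply gle_trans with q; auto.
    - intros b' a b c. apply Hb2max; auto. apply gle_trans with m; auto. }
  destruct (classic (gle q p)) as [Hqp|Hnqp].
  { assert (Hmp : gle m p) by (apply Hmmin; auto using gle_refl).
    assert (Hb21 : gle b2 b1) by (apply Hb1max; auto; apply gle_trans with q; auto).
    apply (finish X k j b1 m HjG Hb1br).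
    - apply Hjmin; auto using gle_refl.
    - auto.
    - apply gle_trans with p; auto.
    - intros b' a b c. apply Hb1max; auto. apply gle_trans with m; auto. }
  apply (finish X k j m m HjG); [ | | | apply gle_refl | auto].
  -
    left. exists (Rmax (gs p) (gs q)).
    assert (Lp : gs p < gs m).
    { destruct (Rle_lt_or_eq_dec _ _ (proj1 Hpm)) as [h|h]; auto.
      exfalso. apply Hnqp. eapply gle_trans; [exact Hqm|].
      apply comparable_sc with X k p; auto using gle_refl; lra. }
    assert (Lq : gs q < gs m).
    { destruct (Rle_lt_or_eq_dec _ _ (proj1 Hqm)) as [h|h]; auto.
      exfalso. apply Hnpq. eapply gle_trans; [exact Hpm|].
      apply comparable_sc with X k q; auto using gle_refl; lra. }
    split; [apply Rmax_lub_lt; auto|].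
    intros s [Hs1 Hs2].
    assert (h1 := Rmax_l (gs p) (gs q)). assert (h2 := Rmax_r (gs p) (gs q)).
    destruct (lift X k p m s Hp HmG Hpm ltac:(lra) ltac:(lra)) as [p0 [A0 [B0 [C0 D0]]]].
    destruct (lift X k q m s Hq HmG Hqm ltac:(lra) ltac:(lra)) as [p1 [A1 [B1 [C1 D1]]]].
    exists p0, p1. refine (conj A0 (conj A1 (conj B0 (conj B1 (conj _ (conj D0 D1)))))).
    intros [E F]. assert (G : gle q p0).
    { eapply gle_trans; [exact C1|]. split; [lra|]. intros y Hy; apply F; auto. }
    assert (Hm0 : gle m p0) by (apply Hmmin; auto).
    destruct Hm0; lra.
  - apply Hjmin; auto; [apply gle_trans with p|apply gle_trans with q]; auto.
  - apply Hmmin; auto.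
    + destruct (comparable X k b1 p j Hb1G Hp HjG Hb1p Hb1j) as [h|h]; auto.
      exfalso. assert (g : gle b2 p) by (eapply gle_trans; eauto).
      destruct (comparable X k b2 p q Hb2G Hp Hq g Hb2q); tauto.
    + destruct (comparable X k b2 q j Hb2G Hq HjG Hb2q Hb2j) as [h|h]; auto.
      exfalso. assert (g : gle b1 q) by (eapply gle_trans; eauto).
      destruct (comparable X k b1 p q Hb1G Hp Hq Hb1p g); tauto.
Qed.
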